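(* Let $1\le D\le K-1$ and let $\mathbf{L}$ be the $(K,D)$ AIR matrix. Let $\mathbf{L}(j,k)=1$ with $j\ge K-D$. (1) If the entry $(j,k)$ lies in the odd submatrix $\mathbf{I}_{\beta_{2i+1}\lambda_{2i+1}\times\lambda_{2i+1}}$ for some $i\in[0:\lceil l/2\rceil-1]$, then $d_{up}(j,k)=\lambda_{2i+1}$. (2) If the entry $(j,k)$ lies in the even submatrix $\mathbf{I}_{\lambda_{2i}\times\beta_{2i}\lambda_{2i}}$ for some $i\in[0:\lfloor l/2\rfloor]$, and $k_R=k-(K-D-\lambda_{2i-1})=c\lambda_{2i}+d$ with integers $c\ge0$, $0\le d<\lambda_{2i}$, then $d_{up}(j,k)=\lambda_{2i-1}-c\lambda_{2i}$.
   Context: Notation: $[a:b]=\{a,\dots,b\}$. Let $K,D$ be integers with $1\le D\le K-1$. Define $\lambda_{-1}=K-D$, $\lambda_0=D$ and recursively, by Euclidean division, $\lambda_{i-1}=\beta_i\lambda_i+\lambda_{i+1}$ with $0\le\lambda_{i+1}<\lambda_i$, for $i=0,1,2,\dots$, stopping at the index $l\ge0$ with $\lambda_{l+1}=0$; $\beta_0\ge0$ may be $0$, $\beta_i\ge1$ for $i\ge1$. Set $\lambda_j=0$ for $j>l$. For $n\mid m$, $\mathbf{I}_{m\times n}$ is $m/n$ copies of the $n\times n$ identity stacked vertically and $\mathbf{I}_{n\times m}$ its transpose. The $(K,D)$ AIR matrix $\mathbf{L}$ is the $K\times(K-D)$ $0/1$ matrix (rows $[0:K-1]$, columns $[0:K-D-1]$)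 that is zero except in the blocks: the $(K-D)\times(K-D)$ identity in rows and columns $[0:K-D-1]$; for $0\le 2i\le l$, the even submatrix $\mathbf{I}_{\lambda_{2i}\times\beta_{2i}\lambda_{2i}}$ in rows $[K-\lambda_{2i}:K-1]$, columns $[K-D-\lambda_{2i-1}:K-D-\lambda_{2i+1}-1]$ (absent if $i=0,\beta_0=0$); for $1\le 2i+1\le l$, the odd submatrix $\mathbf{I}_{\beta_{2i+1}\lambda_{2i+1}\times\lambda_{2i+1}}$ in rows $[K-\lambda_{2i}:K-\lambda_{2i+2}-1]$, columns $[K-D-\lambda_{2i+1}:K-D-1]$. Up-distance: for $\mathbf{L}(j,k)=1$ with $j\ge K-D$, let $j'$ be the largest row index with $j'<j$ and $\mathbf{L}(j',k)=1$; then $d_{up}(j,k)=j-j'$. *)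

(* Defs.v *)
From mathcomp Require Import all_boot all_order all_algebra.
Set Implicit Arguments. Unset Strict Implicit. Unset Printing Implicit Defensive.

(* Euclidean remainder sequence, shifted by one:
   lam K D n = lambda_{n-1}; so lam K D 0 = K-D = lambda_{-1}, lam K D 1 = D = lambda_0,
   lam K D (n+2) = lambda_{n+1} = lambda_{n-1} mod lambda_n, and once a zero is
   reached all further terms are 0. *)
Fixpoint lampair (a b : nat) (n : nat) : nat * nat :=
  match n with
  | 0 => (a, b)
  | n'.+1 => let p := lampair a b n' in
             (p.2, if p.2 == 0 then 0 else p.1 %% p.2)
  end.

Definition lam (K D n : nat) : nat := (lampair (K - D) D n).1.

(* l : the index with lambda_{l+1} = 0 (first such), i.e. first n with lam (n+2) = 0.
   (l < D < K, so searching in [0, K) suffices.) *)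
Definition air_l (K D : nat) : nat := find (fun n => lam K D n.+2 == 0) (iota 0 K).

(* Position of (j,k) inside the even block I_{lambda_{2i} x beta_{2i} lambda_{2i}}:
   rows [K-lambda_{2i} : K-1], columns [K-D-lambda_{2i-1} : K-D-lambda_{2i+1}-1]. *)
Definition in_even (K D i j k : nat) : bool :=
  (K - lam K D (2*i).+1 <= j < K) &&
  (K - D - lam K D (2*i) <= k < K - D - lam K D (2*i).+2).

(* Entry of I_{n x m} (horizontal copies of I_n): 1 iff r = c mod n. *)
Definition even_entry (K D i j k : nat) : bool :=
  in_even K D i j k &&
  ((j - (K - lam K D (2*i).+1)) == (k - (K - D - lam K D (2*i))) %% lam K D (2*i).+1).

(* Odd block I_{beta_{2i+1} lambda_{2i+1} x lambda_{2i+1}}: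
   rows [K-lambda_{2i} : K-lambda_{2i+2}-1], columns [K-D-lambda_{2i+1} : K-D-1]. *)
Definition in_odd (K D i j k : nat) : bool :=
  (K - lam K D (2*i).+1 <= j < K - lam K D (2*i).+3) &&
  (K - D - lam K D (2*i).+2 <= k < K - D).

(* Entry of I_{m x n} (vertical copies of I_n): 1 iff r mod n = c. *)
Definition odd_entry (K D i j k : nat) : bool :=
  in_odd K D i j k &&
  ((j - (K - lam K D (2*i).+1)) %% lam K D (2*i).+2 == k - (K - D - lam K D (2*i).+2)).

Definition airL (K D j k : nat) : bool :=
  [&& j < K - D, k < K - D & j == k]
    || has (fun i => (2*i <= air_l K D) && even_entry K D i j k) (iota 0 (air_l K D).+1)
    || has (fun i => ((2*i).+1 <= air_l K D) && odd_entry K D i j k) (iota 0 (air_l K D).+1).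

Definition dup (K D j k : nat) : nat :=
  j - \max_(j' < j | airL K D j' k) (j' : nat).

(* Main.v *)
Require Import Defs.
From mathcomp Require Import all_boot all_order all_algebra.
From mathcomp Require Import zify.

Lemma aSS K D n : lam K D n.+2 = if lam K D n.+1 == 0 then 0 else lam K D n %% lam K D n.+1.
Proof. by []. Qed.

Lemma aS_le K D n : 0 < n -> lam K D n.+1 <= lam K D n.
Proof.
case: n => [//|n] _; rewrite aSS; case: eqP => [->//|/eqP nz].
by apply: ltnW; rewrite ltn_pmod // lt0n.
Qed.

Lemma a_mono K D m n : 0 < m -> m <= n -> lam K D n <= lam K D m.
Proof.
move=> m0 /subnK <-; elim: (n - m) => [//|x IH].
rewrite addSn; apply: leq_trans IH; apply: aS_le; lia.
Qed.

Lemma a_leKD K D n : n != 1 -> lam K D n <= K - D.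
Proof.
case: n => [//|[//|n]] _.
apply: (@leq_trans (lam K D 2)); first by apply: a_mono.
by rewrite aSS; case: ifP => // _; apply: leq_mod.
Qed.

Lemma a_leD K D n : 0 < n -> lam K D n <= D.
Proof. by move=> n0; have := @a_mono K D 1 n isT n0. Qed.

Lemma a_decomp K D n : 0 < n -> 0 < lam K D n.+1 ->
  exists m, lam K D n = (m.+1) * lam K D n.+1 + lam K D n.+2 /\ lam K D n.+2 < lam K D n.+1.
Proof.
move=> n0 p0; have le := @aS_le K D n n0.
have e : lam K D n.+2 = lam K D n %% lam K D n.+1 by rewrite aSS; case: eqP => //; lia.
have q0 : 0 < lam K D n %/ lam K D n.+1 by rewrite divn_gt0.
exists (lam K D n %/ lam K D n.+1).-1; rewrite prednK // e ltn_pmod //; split=> //.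
exact: divn_eq.
Qed.

Lemma chain K D i : lam K D (2*i).+3 <= lam K D (2*i).+2 /\ lam K D (2*i).+2 <= lam K D (2*i).+1
  /\ lam K D (2*i).+2 <= lam K D (2*i).
Proof.
split; first by apply: aS_le.
split; first by apply: aS_le.
case: i => [|i]; first by rewrite aSS; case: ifP => // _; apply: leq_mod.
by apply: a_mono; lia.
Qed.

Lemma cmp K D i' i : i' < i -> lam K D (2*i) <= lam K D (2*i').+2 /\ lam K D (2*i).+1 <= lam K D (2*i').+3.
Proof. move=> h; split; apply: a_mono; lia. Qed.

Lemma a_pos K D n : 1 <= D -> n <= air_l K D -> 0 < lam K D n.+1.
Proof.
move=> D1; case: n => [//|n] h.
have hs : air_l K D <= size (iota 0 K) by apply: find_size.
have := @before_find _ 0 (fun n => lam K D n.+2 == 0) (iota 0 K) n h.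
rewrite size_iota in hs; rewrite nth_iota; last by lia.
by rewrite add0n lt0n => ->.
Qed.

Lemma dup_eq K D j k w : w < j -> airL K D w k ->
  (forall j', w < j' -> j' < j -> ~~ airL K D j' k) -> dup K D j k = j - w.
Proof.
move=> wj Lw H; rewrite /dup.
suff -> : \max_(j' < j | airL K D j' k) (j' : nat) = w by [].
apply/eqP; rewrite eqn_leq; apply/andP; split.
  apply/bigmax_leqP => i Hi; case: (leqP (i : nat) w) => // wi.
  by have := H i wi (ltn_ord i); rewrite Hi.
exact: (@leq_bigmax_cond _ _ (fun j' : 'I_j => (j' : nat)) (Ordinal wj)).
Qed.

Lemma mod_close p a b : 0 < p -> b < a -> a < b + p -> a %% p != b %% p.
Proof.
move=> p0 ba abp; apply/negP => /eqP e.
have : p %| a - b by rewrite -eqn_mod_dvd ?e //; lia.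
move/dvdn_leq; lia.
Qed.

Lemma airL_elim K D j k : airL K D j k ->
  [/\ j < K - D, k < K - D & j = k] \/
  (exists i, 2*i <= air_l K D /\ even_entry K D i j k) \/
  (exists i, (2*i).+1 <= air_l K D /\ odd_entry K D i j k).
Proof.
rewrite /airL => /orP [/orP [/and3P [h1 h2 /eqP h3]|/hasP [i _ /andP [h1 h2]]] | /hasP [i _ /andP [h1 h2]]].
- by left.
- by right; left; exists i.
- by right; right; exists i.
Qed.

Lemma airL_id K D j : j < K - D -> airL K D j j.
Proof. by move=> h; rewrite /airL h eqxx. Qed.

Lemma airL_even K D i j k : 2*i <= air_l K D -> even_entry K D i j k -> airL K D j k.
Proof.
move=> h e; rewrite /airL; apply/orP; left; apply/orP; right; apply/hasP.
exists i; first by rewrite mem_iota; lia.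
by rewrite h e.
Qed.

Lemma airL_odd K D i j k : (2*i).+1 <= air_l K D -> odd_entry K D i j k -> airL K D j k.
Proof.
move=> h e; rewrite /airL; apply/orP; right; apply/hasP.
exists i; first by rewrite mem_iota; lia.
by rewrite h e.
Qed.

Lemma facts K D i : 1 <= D -> D < K ->
  lam K D (2*i).+3 <= lam K D (2*i).+2 /\ lam K D (2*i).+2 <= lam K D (2*i).+1
  /\ lam K D (2*i).+2 <= lam K D (2*i).
Proof. by move=> D1 DK; have [? [? ?]] := chain K D i. Qed.

Lemma in_odd_E K D i j k : 1 <= D -> D < K -> in_odd K D i j k ->
  [/\ K <= j + lam K D (2*i).+1, j + lam K D (2*i).+3 < K, K <= D + k + lam K D (2*i).+2 & D + k < K].
Proof.
move=> D1 DK; rewrite /in_odd => /andP [/andP [h1 h2] /andP [h3 h4]].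
have ? : lam K D (2*i).+2 <= K - D by apply: a_leKD; lia.
have ? := @a_leD K D (2*i).+1 isT.
split; lia.
Qed.

Lemma in_even_E K D i j k : 1 <= D -> D < K -> in_even K D i j k ->
  [/\ K <= j + lam K D (2*i).+1, j < K, K <= D + k + lam K D (2*i) & D + k + lam K D (2*i).+2 < K].
Proof.
move=> D1 DK; rewrite /in_even => /andP [/andP [h1 h2] /andP [h3 h4]].
have ? : lam K D (2*i) <= K - D by apply: a_leKD; lia.
have ? := @a_leD K D (2*i).+1 isT.
split; lia.
Qed.

Arguments in_odd_E {K D i j k}.
Arguments in_even_E {K D i j k}.

Ltac cmp2 K D i i' :=
  have := facts K D i; have := facts K D i';
  case: (ltngtP i' i) => [hh|hh|hh];
  [ have := @cmp K D _ _ hh | have := @cmp K D _ _ hh | subst i' ].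

Lemma odd_entry_of K D i j k : 1 <= D -> D < K -> K - D <= j ->
  in_odd K D i j k -> airL K D j k ->
  (j - (K - lam K D (2*i).+1)) %% lam K D (2*i).+2 = k - (K - D - lam K D (2*i).+2).
Proof.
move=> D1 DK Kj Hin /airL_elim [[h1 h2 h3] | [[i' [hi' /andP [He _]]] | [i' [hi' /andP [Ho /eqP E]]]]].
- lia.
- have [? ? ? ?] := in_even_E D1 DK He; have [? ? ? ?] := in_odd_E D1 DK Hin.
  clear He Hin; cmp2 K D i i'; move=> *; exfalso; lia.
- have [? ? ? ?] := in_odd_E D1 DK Ho; have [? ? ? ?] := in_odd_E D1 DK Hin.
  clear Hin; by cmp2 K D i i'; [move=> *; exfalso; lia | move=> *; exfalso; lia | ].
Qed.

Lemma even_entry_of K D i j k : 1 <= D -> D < K -> K - D <= j ->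
  in_even K D i j k -> airL K D j k ->
  j - (K - lam K D (2*i).+1) = (k - (K - D - lam K D (2*i))) %% lam K D (2*i).+1.
Proof.
move=> D1 DK Kj Hin /airL_elim [[h1 h2 h3] | [[i' [hi' /andP [He /eqP E]]] | [i' [hi' /andP [Ho _]]]]].
- lia.
- have [? ? ? ?] := in_even_E D1 DK He; have [? ? ? ?] := in_even_E D1 DK Hin.
  clear Hin; by cmp2 K D i i'; [move=> *; exfalso; lia | move=> *; exfalso; lia | ].
- have [? ? ? ?] := in_odd_E D1 DK Ho; have [? ? ? ?] := in_even_E D1 DK Hin.
  clear Ho Hin; cmp2 K D i i'; move=> *; exfalso; lia.
Qed.

Lemma upper K D i t : 1 <= D -> D < K -> 2*i <= air_l K D -> 0 < t -> t <= lam K D (2*i) ->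
  airL K D (K - lam K D (2*i).+1 - t) (K - D - t) /\
  forall y, 0 < y -> y < t -> ~~ airL K D (K - lam K D (2*i).+1 - y) (K - D - t).
Proof.
move=> D1 DK hl t0.
case: i hl => [|i0] hl.
  rewrite muln0 => ht.
  have e1 : lam K D 1 = D by [].
  have e0 : lam K D 0 = K - D by [].
  rewrite e1; split; first by apply: airL_id; lia.
  move=> y y0 yt; apply/negP => /airL_elim [[h1 h2 h3] | [[i' [hi' /andP [He _]]] | [i' [hi' /andP [Ho _]]]]].
  - rewrite e0 in ht; lia.
  - have [? ? ? ?] := in_even_E D1 DK He; have ? := @a_leD K D (2*i').+1 isT; lia.
  - have [? ? ? ?] := in_odd_E D1 DK Ho; have ? := @a_leD K D (2*i').+1 isT; lia.
have e2 : 2 * i0.+1 = (2*i0).+2 by lia.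
rewrite e2 in hl *; move=> ht.
have P0 : 0 < lam K D (2*i0).+2 by apply: a_pos; lia.
have [m [Ea Eq]] := @a_decomp K D (2*i0).+1 isT P0.
rewrite [m.+1 * _]mulSn in Ea.
have ? := @a_leD K D (2*i0).+1 isT.
have ? : lam K D (2*i0).+2 <= K - D by apply: a_leKD; lia.
split.
  apply: (@airL_odd K D i0); first by lia.
  rewrite /odd_entry /in_odd; apply/andP; split.
    apply/andP; split; apply/andP; split; lia.
  have -> : K - lam K D (2 * i0).+3 - t - (K - lam K D (2 * i0).+1) =
     m * lam K D (2*i0).+2 + (lam K D (2*i0).+2 - t) by lia.
  rewrite modnMDl modn_small; last by lia.
  apply/eqP; lia.
move=> y y0 yt; apply/negP => /airL_elim [[h1 h2 h3] | [[i' [hi' /andP [He _]]] | [i' [hi' /andP [Ho /eqP E]]]]].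
- lia.
- have [? ? ? ?] := in_even_E D1 DK He.
  clear He; cmp2 K D i0 i'; move=> *; lia.
- have [? ? ? ?] := in_odd_E D1 DK Ho.
  clear Ho; cmp2 K D i0 i'; [move=> *; lia | move=> *; lia | ].
  move: E; have -> : K - lam K D (2 * i0).+3 - y - (K - lam K D (2 * i0).+1) =
     m * lam K D (2*i0).+2 + (lam K D (2*i0).+2 - y) by lia.
  rewrite modnMDl modn_small; last by lia.
  move=> *; lia.
Qed.

Definition myhide (P : Prop) := P.

Arguments odd_entry_of {K D i j k}.
Arguments even_entry_of {K D i j k}.

Lemma part1 K D j k i : 1 <= D -> D < K -> airL K D j k -> K - D <= j ->
  (2*i).+1 <= air_l K D -> in_odd K D i j k -> dup K D j k = lam K D (2*i).+2.
Proof.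
move=> D1 DK HL Kj hl Hin.
have E : myhide ((j - (K - lam K D (2*i).+1)) %% lam K D (2*i).+2 = k - (K - D - lam K D (2*i).+2))
  := odd_entry_of D1 DK Kj Hin HL.
have [h1 h2 h3 h4] := in_odd_E D1 DK Hin.
have P0 : 0 < lam K D (2*i).+2 by apply: a_pos; lia.
have ? := @a_leD K D (2*i).+1 isT.
have ? : lam K D (2*i).+2 <= K - D by apply: a_leKD; lia.
have [c1 [c2 c3]] := facts K D i D1 DK.
have mid : forall j', K - lam K D (2*i).+1 <= j' -> j' < j -> j - lam K D (2*i).+2 < j' ->
    ~~ airL K D j' k.
  move=> j' hj1 hj2 hj3; apply/negP => /airL_elim
    [[g1 g2 g3] | [[i' [hi' /andP [He _]]] | [i' [hi' /andP [Ho /eqP E']]]]].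
  - lia.
  - have [? ? ? ?] := in_even_E D1 DK He.
    clear He; cmp2 K D i i'; move=> *; lia.
  - have [? ? ? ?] := in_odd_E D1 DK Ho.
    clear Ho; cmp2 K D i i'; [move=> *; lia | move=> *; lia | ].
    move=> *; have E2 := E; rewrite /myhide in E2.
    have M := @mod_close (lam K D (2*i).+2) (j - (K - lam K D (2*i).+1))
      (j' - (K - lam K D (2*i).+1)) P0.
    move: M; rewrite E2 E' eqxx => M.
    have : false by apply: M; clear E2 E'; lia.
    by [].
case: (leqP (lam K D (2*i).+2) (j - (K - lam K D (2*i).+1))) => hr.
  rewrite (@dup_eq K D j k (j - lam K D (2*i).+2)); first by lia.
  - lia.
  - apply: (@airL_odd K D i) => //.
    rewrite /odd_entry /in_odd; apply/andP; split.
      apply/andP; split; apply/andP; split; lia.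
    move: E; rewrite /myhide; have -> : j - (K - lam K D (2 * i).+1) =
       (j - lam K D (2*i).+2 - (K - lam K D (2 * i).+1)) + lam K D (2*i).+2 by lia.
    by rewrite modnDr => ->.
  - move=> j' hj1 hj2; apply: mid; lia.
move: E; rewrite /myhide modn_small // => E.
have [U1 U2] := @upper K D i (K - D - k) D1 DK ltac:(lia) ltac:(lia) ltac:(lia).
have ek : K - D - (K - D - k) = k by lia.
rewrite ek in U1 U2.
rewrite (@dup_eq K D j k (K - lam K D (2 * i).+1 - (K - D - k))) //; first by lia.
- lia.
- move=> j' hj1 hj2.
  case: (leqP (K - lam K D (2*i).+1) j') => hj3; first by apply: mid; lia.
  have -> : j' = K - lam K D (2 * i).+1 - (K - lam K D (2 * i).+1 - j') by lia.
  apply: U2; lia.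
Qed.

Lemma part2 K D j k i : 1 <= D -> D < K -> airL K D j k -> K - D <= j ->
  2*i <= air_l K D -> in_even K D i j k ->
  forall c d : nat,
       k - (K - D - lam K D (2*i)) = c * lam K D (2*i).+1 + d ->
       d < lam K D (2*i).+1 ->
       dup K D j k = lam K D (2*i) - c * lam K D (2*i).+1 /\ c * lam K D (2*i).+1 <= lam K D (2*i).
Proof.
move=> D1 DK HL Kj hl Hin c d Es hd.
have E := even_entry_of D1 DK Kj Hin HL.
rewrite Es modnMDl modn_small // in E.
have [h1 h2 h3 h4] := in_even_E D1 DK Hin.
have q0 : 0 < lam K D (2*i).+1 by apply: a_pos; lia.
have ? := @a_leD K D (2*i).+1 isT.
have ? : lam K D (2*i) <= K - D by apply: a_leKD; lia.
have [c1 [c2 c3]] := facts K D i D1 DK.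
have mid : forall j', K - lam K D (2*i).+1 <= j' -> j' < j -> ~~ airL K D j' k.
  move=> j' hj1 hj2; apply/negP => /airL_elim
    [[g1 g2 g3] | [[i' [hi' /andP [He /eqP E']]] | [i' [hi' /andP [Ho _]]]]].
  - lia.
  - have [? ? ? ?] := in_even_E D1 DK He.
    clear He; cmp2 K D i i'; [move=> *; clear E'; lia | move=> *; clear E'; lia | ].
    rewrite Es modnMDl modn_small // in E'; move=> *; lia.
  - have [? ? ? ?] := in_odd_E D1 DK Ho.
    clear Ho; cmp2 K D i i'; move=> *; lia.
have [U1 U2] := @upper K D i (K - D - k) D1 DK hl ltac:(lia) ltac:(lia).
have ek : K - D - (K - D - k) = k by lia.
rewrite ek in U1 U2.
rewrite (@dup_eq K D j k (K - lam K D (2 * i).+1 - (K - D - k))) //; first by lia.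
- lia.
- move=> j' hj1 hj2.
  case: (leqP (K - lam K D (2*i).+1) j') => hj3; first by apply: mid; lia.
  have -> : j' = K - lam K D (2 * i).+1 - (K - lam K D (2 * i).+1 - j') by lia.
  apply: U2; lia.
Qed.

Theorem lemma2 (K D j k : nat) :
  1 <= D -> D <= K - 1 ->
  airL K D j k -> K - D <= j ->
  (forall i : nat, i < uphalf (air_l K D) -> in_odd K D i j k ->
     dup K D j k = lam K D (2*i).+2) /\
  (forall i : nat, i <= (air_l K D)./2 -> in_even K D i j k ->
     forall c d : nat,
       k - (K - D - lam K D (2*i)) = c * lam K D (2*i).+1 + d ->
       d < lam K D (2*i).+1 ->
       Posz (dup K D j k) = (Posz (lam K D (2*i)) - Posz (c * lam K D (2*i).+1))%R).
Proof.
move=> D1 DK1 HL Kj.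
have DK : D < K by lia.
split.
  move=> i hi Hin; apply: part1 => //.
  by move: hi; rewrite uphalfE; lia.
move=> i hi Hin c d Es hd.
have hl : 2 * i <= air_l K D by move: hi; rewrite -divn2; lia.
have [-> le] := @part2 K D j k i D1 DK HL Kj hl Hin c d Es hd.
by rewrite subzn.
Qed.
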